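(* Let $R$ be a Noetherian ring and $\Gamma$ an arbitrary finitely generated group with a word metric. Every surjective $R[\Gamma]$-homomorphism $\phi\colon F\to G$ between properly generated $R[\Gamma]$-modules is boundedly bicontrolled as a homomorphism of $\Gamma$-filtered $R$-modules $s(F,\Sigma_F)\to s(G,\Sigma_G)$, for finite generating sets $\Sigma_F,\Sigma_G$ with respect to which $F$ and $G$ are lean and insular.
   Context: Notation: $S[b]$ is the metric $b$-enlargement of $S\subset\Gamma$, $x[b]$ the $b$-ball about $x$. For a finitely generated $R[\Gamma]$-module $F$ with finite generating set $\Sigma$, $s(F,\Sigma)$ is the $\Gamma$-filtered $R$-module with $F(S)=$ the $R$-submodule generated by $\{s\sigma: s\in S,\sigma\in\Sigma\}$. A $\Gamma$-filtered module is lean if $F(S)\subset\sum_{x\in S}F(x[D])$ for some $D\ge0$ and all $S$, insular if $F(S)\cap F(U)\subset F(S[d]\cap U[d])$ for some $d\ge0$ and all $S,U$. A finitely generated $R[\Gamma]$-module $F$ is properly generated if $s(F,\Sigma)$ is lean and insular for some finite generating set $\Sigma$ (the properties then hold for every finite generating set). A homomorphism $f\colon F\to F'$ of filtered modules is boundedly bicontrolled if there is $b\ge0$ such that for all $S$: $f(F(S))\subset F'(S[b])$ and $f(F)\cap F'(S)\subset f(F(S[b]))$. *)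

(* Defs.v *)
From HB Require Import structures.
From mathcomp Require Import all_boot all_order all_algebra.
Set Implicit Arguments. Unset Strict Implicit. Unset Printing Implicit Defensive.
Import GRing.Theory.

Definition left_ideal (R : nzRingType) (I : R -> Prop) : Prop :=
  [/\ I 0%R, (forall x y, I x -> I y -> I (x + y)%R) & (forall r x, I x -> I (r * x)%R)].

Definition noetherian_ring (R : nzRingType) : Prop :=
  forall I : nat -> R -> Prop,
    (forall n, left_ideal (I n)) ->
    (forall n x, I n x -> I n.+1 x) ->
    exists N, forall n, (N <= n)%N -> forall x, I n x <-> I N x.

Section WordMetric.
Local Open Scope group_scope.
Variable gT : groupType.

Definition gprod (l : seq gT) : gT := foldr (fun a b => a * b) 1 l.

Definition letter (gens : seq gT) (a : gT) : Prop :=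
  (exists2 s, s \in gens & a = s) \/ (exists2 s, s \in gens & a = s^-1).

Definition wordlen_le (gens : seq gT) (g : gT) (n : nat) : Prop :=
  exists l : seq gT, [/\ (size l <= n)%N, (forall a, a \in l -> letter gens a) & g = gprod l].

Definition generates_group (gens : seq gT) : Prop :=
  forall g : gT, exists n, wordlen_le gens g n.

(* word metric: d(x,y) = |x^-1 y|;  x[b] is the closed b-ball about x *)
Definition ball_w (gens : seq gT) (x : gT) (b : nat) : gT -> Prop :=
  fun y => wordlen_le gens (x^-1 * y) b.

Definition enlarge (gens : seq gT) (S : gT -> Prop) (b : nat) : gT -> Prop :=
  fun y => exists2 x, S x & ball_w gens x b y.
End WordMetric.

Section Modules.
Local Open Scope ring_scope.
Variables (R : nzRingType) (gT : groupType).

Definition is_RG_action (M : lmodType R) (act : gT -> M -> M) : Prop :=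
  [/\ (forall x, act 1%g x = x),
      (forall g h x, act (g * h)%g x = act g (act h x)),
      (forall g x y, act g (x + y) = act g x + act g y)
    & (forall g (r : R) x, act g (r *: x) = r *: act g x)].

Definition is_RG_hom (M N : lmodType R) (actM : gT -> M -> M) (actN : gT -> N -> N)
  (f : M -> N) : Prop :=
  [/\ (forall x y, f (x + y) = f x + f y),
      (forall (r : R) x, f (r *: x) = r *: f x)
    & (forall g x, f (actM g x) = actN g (f x))].

Definition Rspan (M : lmodType R) (P : M -> Prop) : M -> Prop :=
  fun x => exists l : seq (R * M),
    (forall p, p \in l -> P p.2) /\ x = foldr (fun p acc => p.1 *: p.2 + acc) 0 l.

(* s(F,Sigma)(S) = R-span of { s sigma : s in S, sigma in Sigma } *)
Definition sfilt (M : lmodType R) (act : gT -> M -> M) (Sigma : seq M)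
  (S : gT -> Prop) : M -> Prop :=
  Rspan (fun v => exists s, exists2 sg, sg \in Sigma & S s /\ v = act s sg).

Definition generates_module (M : lmodType R) (act : gT -> M -> M) (Sigma : seq M) : Prop :=
  forall x, sfilt act Sigma (fun _ => True) x.

Definition finsum_of (M : lmodType R) (P : M -> Prop) : M -> Prop :=
  fun x => exists l : seq M, (forall y, y \in l -> P y) /\ x = foldr +%R 0 l.

(* A Gamma-filtered R-module is given by F : (gT -> Prop) -> M -> Prop *)
Definition lean (gens : seq gT) (M : lmodType R) (F : (gT -> Prop) -> M -> Prop) : Prop :=
  exists D : nat, forall S x, F S x ->
    finsum_of (fun y => exists2 s, S s & F (ball_w gens s D) y) x.

Definition insular (gens : seq gT) (M : lmodType R) (F : (gT -> Prop) -> M -> Prop) : Prop :=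
  exists d : nat, forall S U x, F S x -> F U x ->
    F (fun g => enlarge gens S d g /\ enlarge gens U d g) x.

Definition boundedly_bicontrolled (gens : seq gT) (M N : lmodType R)
  (F : (gT -> Prop) -> M -> Prop) (G : (gT -> Prop) -> N -> Prop) (f : M -> N) : Prop :=
  exists b : nat, forall S : gT -> Prop,
    (forall x, F S x -> G (enlarge gens S b) (f x)) /\
    (forall y, (exists x, F (fun _ => True) x /\ y = f x) -> G S y ->
       exists2 x, F (enlarge gens S b) x & f x = y).
End Modules.

(* Main.v *)
Require Import Defs.
From mathcomp Require Import all_boot all_order all_algebra.
Import GRing.Theory.
Set Implicit Arguments. Unset Strict Implicit.

Section Aux.
Variables (R : nzRingType) (gT : groupType).
Local Open Scope ring_scope.

Lemma Rspan0 (M : lmodType R) (P : M -> Prop) : Rspan P 0.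
Proof. by exists [::]. Qed.

Lemma Rspan_gen (M : lmodType R) (P : M -> Prop) v : P v -> Rspan P v.
Proof.
move=> Pv; exists [:: (1, v)]; split; last by rewrite /= scale1r addr0.
by move=> p; rewrite inE => /eqP ->.
Qed.

Lemma RspanD (M : lmodType R) (P : M -> Prop) x y :
  Rspan P x -> Rspan P y -> Rspan P (x + y).
Proof.
move=> [l1 [H1 ->]] [l2 [H2 ->]]; exists (l1 ++ l2); split.
  by move=> p; rewrite mem_cat => /orP [] ?; [apply: H1|apply: H2].
elim: l1 {H1} => [|p l IH] /=; first by rewrite add0r.
by rewrite -addrA -IH.
Qed.

Lemma RspanZ (M : lmodType R) (P : M -> Prop) (r : R) x :
  Rspan P x -> Rspan P (r *: x).
Proof.
move=> [l [H ->]]; exists (map (fun p => (r * p.1, p.2)) l); split.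
  by move=> p /mapP [q qin ->]; exact: (H q qin).
elim: l {H} => [|p l IH] /=; first by rewrite scaler0.
by rewrite scalerDr IH scalerA.
Qed.

Lemma Rspan_mono (M : lmodType R) (P Q : M -> Prop) x :
  (forall v, P v -> Q v) -> Rspan P x -> Rspan Q x.
Proof. by move=> PQ [l [H ->]]; exists l; split => // p /H /PQ. Qed.

Lemma Rspan_map (M N : lmodType R) (P : M -> Prop) (Q : N -> Prop) (f : M -> N) z :
  (forall x y, f (x + y) = f x + f y) -> (forall (r : R) x, f (r *: x) = r *: f x) ->
  (forall v, P v -> Rspan Q (f v)) -> Rspan P z -> Rspan Q (f z).
Proof.
move=> fD fZ PQ [l [H ->]].
have f0 : f 0 = 0.
  by apply: (addrI (f 0)); rewrite addr0 -fD addr0.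
elim: l H => [|p l IH] H /=; first by rewrite f0; apply: Rspan0.
rewrite fD fZ; apply: RspanD; first by apply: RspanZ; apply: PQ; apply: H; rewrite inE eqxx.
by apply: IH => q qin; apply: H; rewrite inE qin orbT.
Qed.

Lemma Rspan_lift (M N : lmodType R) (P : N -> Prop) (Q : M -> Prop) (f : M -> N) y :
  (forall x y, f (x + y) = f x + f y) -> (forall (r : R) x, f (r *: x) = r *: f x) ->
  (forall v, P v -> exists2 x, Rspan Q x & f x = v) -> Rspan P y ->
  exists2 x, Rspan Q x & f x = y.
Proof.
move=> fD fZ PQ [l [H ->]].
have f0 : f 0 = 0.
  by apply: (addrI (f 0)); rewrite addr0 -fD addr0.
elim: l H => [|p l IH] H /=; first by exists 0; [apply: Rspan0|].
have [x1 Q1 e1] := PQ p.2 (H p (mem_head _ _)).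
have [x2 Q2 e2] : exists2 x, Rspan Q x & f x = foldr (fun p acc => p.1 *: p.2 + acc) 0 l.
  by apply: IH => q qin; apply: H; rewrite inE qin orbT.
exists (p.1 *: x1 + x2); first by apply: RspanD => //; apply: RspanZ.
by rewrite fD fZ e1 e2.
Qed.

Lemma wordlen_mono (gens : seq gT) g n m :
  (n <= m)%N -> wordlen_le gens g n -> wordlen_le gens g m.
Proof. by move=> nm [l [sl H ->]]; exists l; split => //; apply: leq_trans nm. Qed.

Definition bnd (M : lmodType R) (act : gT -> M -> M) (Sig : seq M) (gens : seq gT)
  (b : nat) (z : M) := sfilt act Sig (fun t => wordlen_le gens t b) z.
Arguments bnd {M}.

Lemma bnd_mono (M : lmodType R) (act : gT -> M -> M) (Sig : seq M) (gens : seq gT) (b c : nat) (z : M) :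
  (b <= c)%N -> bnd act Sig gens b z -> bnd act Sig gens c z.
Proof.
move=> bc; apply: Rspan_mono => v [s [sg sgin [Hs ->]]].
by exists s; exists sg => //; split => //; apply: wordlen_mono bc Hs.
Qed.

Lemma bnd_exists (M : lmodType R) (act : gT -> M -> M) (Sig : seq M) (gens : seq gT) (z : M) :
  generates_group gens -> sfilt act Sig (fun _ => True) z ->
  exists b, bnd act Sig gens b z.
Proof.
move=> gg [l [H ->]].
elim: l H => [|p l IH] H /=; first by exists 0%N; apply: Rspan0.
have [b Hb] : exists b, bnd act Sig gens b (foldr (fun p acc => p.1 *: p.2 + acc) 0 l).
  by apply: IH => q qin; apply: H; rewrite inE qin orbT.
have [s [sg sgin [_ e]]] := H p (mem_head _ _).
have [n Hn] := gg s.
exists (maxn n b); apply: RspanD; last by apply: bnd_mono Hb; rewrite leq_maxr.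
apply: RspanZ; apply: Rspan_gen; exists s; exists sg => //; split => //.
by apply: wordlen_mono Hn; rewrite leq_maxl.
Qed.

Lemma list_bound (A : eqType) (Pb : nat -> A -> Prop) (s : seq A) :
  (forall b c a, (b <= c)%N -> Pb b a -> Pb c a) ->
  (forall a, a \in s -> exists b, Pb b a) ->
  exists b, forall a, a \in s -> Pb b a.
Proof.
move=> mono; elim: s => [|x s IH] H; first by exists 0%N.
have [b Hb] : exists b, forall a, a \in s -> Pb b a.
  by apply: IH => a ain; apply: H; rewrite inE ain orbT.
have [c Hc] := H x (mem_head _ _).
exists (maxn b c) => a; rewrite inE => /orP [/eqP ->|ain].
  by apply: mono Hc; rewrite leq_maxr.
by apply: mono (Hb a ain); rewrite leq_maxl.
Qed.

Lemma transl (M : lmodType R) (act : gT -> M -> M) (Sig : seq M) (gens : seq gT) (S : gT -> Prop) (s : gT) (b : nat) (z : M) :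
  is_RG_action act -> S s -> bnd act Sig gens b z ->
  sfilt act Sig (enlarge gens S b) (act s z).
Proof.
move=> [a1 aM aD aZ] Ss; apply: Rspan_map => //.
move=> v [t [sg sgin [Ht ->]]]; apply: Rspan_gen; exists (s * t)%g; exists sg => //; split.
  by exists s => //; rewrite /ball_w mulKg.
by rewrite aM.
Qed.
End Aux.
Arguments bnd {R gT M}.

Theorem lemma3p5 (R : nzRingType) (gT : groupType) (gens : seq gT)
  (M N : lmodType R) (actM : gT -> M -> M) (actN : gT -> N -> N)
  (SigmaM : seq M) (SigmaN : seq N) (phi : M -> N) :
  noetherian_ring R ->
  generates_group gens ->
  is_RG_action actM -> is_RG_action actN ->
  generates_module actM SigmaM -> generates_module actN SigmaN ->
  lean gens (sfilt actM SigmaM) -> insular gens (sfilt actM SigmaM) ->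
  lean gens (sfilt actN SigmaN) -> insular gens (sfilt actN SigmaN) ->
  is_RG_hom actM actN phi ->
  (forall y : N, exists x : M, phi x = y) ->
  boundedly_bicontrolled gens (sfilt actM SigmaM) (sfilt actN SigmaN) phi.
Proof.
move=> _ gg aM aN genM genN _ _ _ _ [pD pZ pA] surj.
have [b1 Hb1] : exists b, forall sg, sg \in SigmaM -> bnd actN SigmaN gens b (phi sg).
  apply: list_bound => [b c a bc|a _]; first exact: bnd_mono.
  exact: bnd_exists.
have [b2 Hb2] : exists b, forall t, t \in SigmaN ->
    exists x, phi x = t /\ bnd actM SigmaM gens b x.
  apply: (list_bound (Pb := fun b t => exists x, phi x = t /\ bnd actM SigmaM gens b x)).
    by move=> b c a bc [x [e H]]; exists x; split => //; apply: bnd_mono H.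
  move=> t _; have [x e] := surj t; have [b Hb] := bnd_exists gg (genM x).
  by exists b, x.
exists (maxn b1 b2) => S; split.
  move=> x; apply: Rspan_map => // v [s [sg sgin [Ss ->]]].
  rewrite pA; apply: transl => //.
  by apply: bnd_mono (Hb1 sg sgin); rewrite leq_maxl.
move=> y _; apply: Rspan_lift => // v [s [t tin [Ss ->]]].
have [x [e Hx]] := Hb2 t tin.
exists (actM s x); last by rewrite pA e.
by apply: transl => //; apply: bnd_mono Hx; rewrite leq_maxr.
Qed.
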